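(* Let $T\colon\mathbb R\to\mathbb R$ be nonexpansive with $\operatorname{Fix}T=\varnothing$, let $v:=P_{\overline{\operatorname{ran}}(\mathrm{Id}-T)}0$ and assume $v\in\operatorname{ran}(\mathrm{Id}-T)$. Then: (i) for every $x\in\mathbb R$, the sequence $(T^nx+nv)_{n\in\mathbb N}$ converges; (ii) the map $\mathbb R\to\mathbb R\colon x\mapsto\lim_{n\to\infty}(T^nx+nv)$ is nonexpansive; (iii) if $T$ is firmly nonexpansive, then $x\mapsto\lim_{n\to\infty}(T^nx+nv)$ is firmly nonexpansive.
   Context: $v$ is the element of minimal absolute value of the closure of $\operatorname{ran}(\mathrm{Id}-T)$. A map $T$ is firmly nonexpansive if $\|Tx-Ty\|^2+\|(\mathrm{Id}-T)x-(\mathrm{Id}-T)y\|^2\le\|x-y\|^2$ for all $x,y$. *)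

(* Defs.v *)
From Stdlib Require Import Reals Lra.
Open Scope R_scope.

Definition nonexpansive (T : R -> R) : Prop :=
  forall x y, Rabs (T x - T y) <= Rabs (x - y).

Definition firmly_nonexpansive (T : R -> R) : Prop :=
  forall x y, (T x - T y)^2 + ((x - T x) - (y - T y))^2 <= (x - y)^2.

Definition Fix (T : R -> R) (x : R) : Prop := T x = x.

Definition ran_IdmT (T : R -> R) (w : R) : Prop := exists x, x - T x = w.

Definition closure (S : R -> Prop) (w : R) : Prop :=
  forall eps, 0 < eps -> exists s, S s /\ Rabs (s - w) < eps.

(* v = P_{closure ran(Id-T)} 0 : the element of minimal absolute value
   of the closure of ran(Id - T) (the projection of 0 onto this closed
   convex set). *)
Definition is_min_disp (T : R -> R) (v : R) : Prop :=
  closure (ran_IdmT T) v /\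
  forall w, closure (ran_IdmT T) w -> Rabs v <= Rabs w.

(* Main.v *)
Require Import Defs.
From Stdlib Require Import Reals Lra Lia.
Open Scope R_scope.

Lemma cv_ext (u w : nat -> R) l : (forall n, u n = w n) -> Un_cv u l -> Un_cv w l.
Proof. intros H Hu e He. destruct (Hu e He) as [N HN]. exists N. intros n Hn.
  rewrite <- H. auto. Qed.

Lemma cv_const (c : R) : Un_cv (fun _ => c) c.
Proof. intros e He. exists 0%nat. intros. unfold Rdist. rewrite Rminus_diag, Rabs_R0. lra. Qed.

Lemma lim_le (u : nat -> R) l c : Un_cv u l -> (forall n, u n <= c) -> l <= c.
Proof. intros Hu Hc. destruct (Rle_dec l c) as [|H]; [auto|].
  destruct (Hu (l - c)) as [N HN]; [lra|]. specialize (HN N (le_n _)).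
  specialize (Hc N). unfold Rdist in HN. apply Rabs_def2 in HN. lra. Qed.

Lemma cont_g T : nonexpansive T -> continuity (fun x => x - T x).
Proof. intros HT x e He. exists (e/2). split; [lra|]. intros y [_ Hy].
  simpl in *. unfold Rdist, R_dist in *. specialize (HT y x). idtac.
  replace (y - T y - (x - T x)) with ((y - x) - (T y - T x)) by ring.
  pose proof (Rabs_triang (y-x) (- (T y - T x))). rewrite Rabs_Ropp in H.
  replace (y - x + - (T y - T x)) with (y - x - (T y - T x)) in H by ring. lra. Qed.

Lemma same_sign T : nonexpansive T -> (forall x, ~ Fix T x) ->
  forall x y, 0 < (x - T x) * (y - T y).
Proof. intros HT HF x y.
  destruct (Rlt_le_dec 0 ((x - T x) * (y - T y))) as [|H]; [auto|exfalso].
  destruct (Rle_dec x y) as [Hxy|Hxy].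
  - destruct (IVT_cor _ x y (cont_g T HT) Hxy H) as [z [_ Hz]]. apply (HF z). unfold Fix. lra.
  - destruct (IVT_cor _ y x (cont_g T HT)) as [z [_ Hz]]; [lra| rewrite Rmult_comm; auto|].
    apply (HF z). unfold Fix. lra. Qed.

Lemma iter_S (T : R -> R) n x : Nat.iter (S n) T x = T (Nat.iter n T x).
Proof. reflexivity. Qed.

Lemma iter_ne T : nonexpansive T -> forall n x y,
  Rabs (Nat.iter n T x - Nat.iter n T y) <= Rabs (x - y).
Proof. intros HT n. induction n; intros x y; simpl; [lra|].
  eapply Rle_trans; [apply HT|apply IHn]. Qed.

Lemma firm_iff T : firmly_nonexpansive T -> forall x y,
  (T x - T y)^2 <= (T x - T y) * (x - y).
Proof. intros H x y. specialize (H x y). nra. Qed.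

Lemma between_iff a b : a^2 <= a * b <-> (0 <= a <= b \/ b <= a <= 0).
Proof. split.
  - intros H. destruct (Rtotal_order a 0) as [Ha|[Ha|Ha]].
    + right. destruct (Rle_dec b a); [lra|]. nra.
    + subst. destruct (Rle_dec 0 b); lra.
    + left. destruct (Rle_dec a b); [lra|]. nra.
  - intros [[H1 H2]|[H1 H2]]; nra.
Qed.

Lemma iter_firm T : firmly_nonexpansive T -> forall n x y,
  (Nat.iter n T x - Nat.iter n T y)^2 <= (Nat.iter n T x - Nat.iter n T y) * (x - y).
Proof. intros HT n. induction n; intros x y; simpl; [lra|].
  pose proof (firm_iff T HT (Nat.iter n T x) (Nat.iter n T y)) as H1.
  specialize (IHn x y). simpl in H1.
  set (a := T (Nat.iter n T x) - T (Nat.iter n T y)) in *.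
  set (b := Nat.iter n T x - Nat.iter n T y) in *.
  apply between_iff. apply between_iff in H1. apply between_iff in IHn. lra.
Qed.

Theorem proposition2p6 (T : R -> R) (v : R) :
  nonexpansive T ->
  (forall x, ~ Fix T x) ->
  is_min_disp T v ->
  ran_IdmT T v ->
  (forall x : R, exists l : R,
      Un_cv (fun n : nat => Nat.iter n T x + INR n * v) l) /\
  (forall L : R -> R,
      (forall x, Un_cv (fun n : nat => Nat.iter n T x + INR n * v) (L x)) ->
      nonexpansive L) /\
  (firmly_nonexpansive T ->
   forall L : R -> R,
      (forall x, Un_cv (fun n : nat => Nat.iter n T x + INR n * v) (L x)) ->
      firmly_nonexpansive L).
Proof.
  intros HT HF [Hcl Hmin] [x0 Hx0].
  set (g := fun z => z - T z).
  assert (Hv0 : v <> 0). { intro E. apply (HF x0). unfold Fix. lra. }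
  assert (Hsame : forall z, 0 < (z - T z) * v).
  { intro z. rewrite <- Hx0. apply same_sign; auto. }
  assert (Hsign : forall z, 0 <= v * ((z - T z) - v)).
  { intro z. destruct (Rle_dec 0 (v * ((z - T z) - v))) as [|Hn]; [auto|exfalso].
    assert (Hm := Hmin (z - T z)). assert (Hz := Hsame z).
    assert (closure (ran_IdmT T) (z - T z)).
    { intros e He. exists (z - T z). split. exists z. auto. rewrite Rminus_diag, Rabs_R0. auto. }
    specialize (Hm H).
    destruct (Rle_dec 0 v).
    - rewrite (Rabs_right v), (Rabs_right (z - T z)) in Hm; nra.
    - rewrite (Rabs_left v), (Rabs_left (z - T z)) in Hm; nra. }
  assert (Hstep : forall y, y - T y = v -> T y - T (T y) = v).
  { intros y Hy. assert (H1 := Hsign (T y)). assert (H2 := Hsame (T y)).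
    assert (H3 := HT y (T y)). rewrite Hy in H3.
    destruct (Rle_dec 0 v).
    - rewrite (Rabs_right v), (Rabs_right (T y - T (T y))) in H3; nra.
    - rewrite (Rabs_left v), (Rabs_left (T y - T (T y))) in H3; nra. }
  assert (Horb : forall n, Nat.iter n T x0 = x0 - INR n * v /\
                           Nat.iter n T x0 - T (Nat.iter n T x0) = v).
  { induction n as [|n [IH1 IH2]].
    - simpl. split; [ring|auto].
    - rewrite iter_S. split.
      + rewrite S_INR. lra.
      + apply Hstep. auto. }
  set (s := fun x n => Nat.iter n T x + INR n * v).
  assert (Hbd : forall x n, Rabs (s x n - x0) <= Rabs (x - x0)).
  { intros x n. unfold s. destruct (Horb n) as [H1 _].
    replace (Nat.iter n T x + INR n * v - x0) with (Nat.iter n T x - Nat.iter n T x0) by (rewrite H1; ring).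
    apply iter_ne; auto. }
  assert (Hdiff : forall x y n, s x n - s y n = Nat.iter n T x - Nat.iter n T y).
  { intros; unfold s; ring. }
  split; [|split].
  - intro x. set (u := fun n => v * s x n).
    assert (Hdec : Un_decreasing u).
    { intro n. unfold u, s. rewrite iter_S, S_INR.
      assert (H := Hsign (Nat.iter n T x)). nra. }
    assert (Hlb : has_lb u).
    { exists (- (v * x0) + Rabs v * Rabs (x - x0)). intros y [n Hn]. subst y.
      unfold opp_seq, u.
      assert (H1 := Hbd x n).
      assert (H2 : - (v * (s x n - x0)) <= Rabs v * Rabs (x - x0)).
      { eapply Rle_trans. apply Rle_abs. rewrite Rabs_Ropp, Rabs_mult.
        apply Rmult_le_compat_l; auto. apply Rabs_pos. }
      lra. }
    destruct (decreasing_cv u Hdec Hlb) as [l Hl].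
    exists (l * / v).
    apply (cv_ext (fun n => u n * / v)).
    { intro n. unfold u, s. field. auto. }
    apply CV_mult; auto. apply cv_const.
  - intros L HL x y.
    assert (Hc := CV_minus _ _ _ _ (HL x) (HL y)).
    assert (Hb : forall n, Rabs (s x n - s y n) <= Rabs (x - y)).
    { intro n. rewrite Hdiff. apply iter_ne; auto. }
    apply Rabs_le. split.
    + assert (Ho := CV_opp _ _ Hc).
      assert (- (L x - L y) <= Rabs (x - y)).
      { apply (lim_le _ _ _ Ho). intro n. unfold opp_seq.
        eapply Rle_trans; [|apply (Hb n)]. rewrite <- Rabs_Ropp. apply Rle_abs. }
      lra.
    + apply (lim_le _ _ _ Hc). intro n.
      eapply Rle_trans; [|apply (Hb n)]. apply Rle_abs.
  - intros HF2 L HL x y.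
    assert (Hc := CV_minus _ _ _ _ (HL x) (HL y)).
    assert (Hc2 := CV_minus _ _ _ _ (CV_mult _ _ _ _ Hc Hc) (CV_mult _ _ _ _ Hc (cv_const (x - y)))).
    assert (Hle := lim_le _ _ 0 Hc2).
    assert (H0 : (L x - L y) * (L x - L y) - (L x - L y) * (x - y) <= 0).
    { apply Hle. intro n. simpl. fold (s x n). fold (s y n). rewrite Hdiff.
      assert (H := iter_firm T HF2 n x y). simpl in H. lra. }
    nra.
Qed.
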